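(* For $\tau^1,\tau^2$ both aromas with free edges, or both trees with free edges, $\langle\delta\tau^1,\tau^2\rangle=\langle\tau^1,\overline\delta\tau^2\rangle$. Moreover, for every aroma or tree with free edges $\tau$, $\overline\Phi(\delta\tau)=\partial\,\overline\Phi(\tau)$.
   Context: Fix a finite set $C$ and a field of characteristic zero. A tree (resp. aroma) is a finite connected directed graph with $C$-decorated vertices in which every vertex has exactly one outgoing edge except one root vertex with none (resp. every vertex has exactly one outgoing edge); an aroma contains a unique cycle. A tree or aroma with free edges additionally assigns to each vertex $v$ a number $r_v\ge0$ of free edges (dangling edges ending at $v$); objects are taken up to isomorphism preserving decorations and the $r_v$. $\overline{A_0}$ and $\overline T$ are the spans of aromas and trees with free edges. The symmetry factor $\sigma(\tau)$ is the number of automorphisms preserving decorations and free-edge numbers; the pairing is $\langle\tau,\tau'\rangle=\sigma(\tau)\mathbf 1_{\tau=\tau'}$. For a vertex $v$, $\delta_v$ adds one free edge at $v$ and $\overline\delta_v$ removes one free edge at $v$ (giving $0$ if $r_v=0$); $\delta=\sum_v\delta_v$, $\overline\delta=\sum_v\overline\delta_v$, extended linearly. Let $f(v)$ be the number of (non-free) edges ending at $v$. The extended fertility map is $\overline\Phi(\tau)=\prod_vx^{d(v)}_{f(v)+r_v-1}$, a monomial in variables $x^a_j$ ($a\in C$, $j\ge-1$); for aromas it is regarded in the space $\overline{M_0}$ and for trees in the space $\overline{M_{-1}}$ (formal copies of spans of monomials). $\partial$ is the derivation $\partial x^a_j=x^a_{j+1}$, acting on each of these spaces. *)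

(* Defs.v *)
From HB Require Import structures.
From mathcomp Require Import all_boot all_order all_algebra.
From mathcomp Require Import finmap multiset.

Unset Strict Implicit.
Unset Printing Implicit Defensive.
Import GRing.Theory.

Section Graphs.
Variable C : finType.

(* A finite directed graph with C-decorated vertices 'I_n, in which every
   vertex has at most one outgoing edge (v -> w iff fg_succ v = Some w), and
   with fg_r v free edges at each vertex v. *)
Record fe_graph := FGraph {
  fg_n : nat;
  fg_dec : {ffun 'I_fg_n -> C};
  fg_succ : {ffun 'I_fg_n -> option 'I_fg_n};
  fg_r : {ffun 'I_fg_n -> nat}
}.

Definition fg_adj (t : fe_graph) : rel 'I_(fg_n t) :=
  fun u v => (fg_succ t u == Some v) || (fg_succ t v == Some u).
Definition fg_connected (t : fe_graph) :=
  [forall u, forall v, connect (fg_adj t) u v].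

Definition is_tree (t : fe_graph) :=
  fg_connected t && (#|[pred v | fg_succ t v == None]| == 1).
Definition is_aroma (t : fe_graph) :=
  (0 < fg_n t) && fg_connected t && [forall v, fg_succ t v != None].

Definition isomap (t t' : fe_graph) (g : {ffun 'I_(fg_n t) -> 'I_(fg_n t')}) :=
  injectiveb g &&
  [forall v, [&& fg_dec t' (g v) == fg_dec t v,
                 fg_r t' (g v) == fg_r t v &
                 fg_succ t' (g v) == omap g (fg_succ t v)]].

Definition fg_iso (t t' : fe_graph) :=
  (fg_n t == fg_n t') && [exists g, isomap t t' g].

Definition sigma (t : fe_graph) : nat := #|[pred g | isomap t t g]|.

Definition pairing (F : nzRingType) (t t' : fe_graph) : F :=
  if fg_iso t t' then (sigma t)%:R%R else 0%R.

Definition delta_v (t : fe_graph) (v : 'I_(fg_n t)) : fe_graph :=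
  @FGraph (fg_n t) (fg_dec t) (fg_succ t) [ffun w => fg_r t w + (w == v)].
(* deltabar_v : remove one free edge at v (used only when fg_r t v > 0;
   otherwise deltabar_v t = 0 in the vector space) *)
Definition deltabar_v (t : fe_graph) (v : 'I_(fg_n t)) : fe_graph :=
  @FGraph (fg_n t) (fg_dec t) (fg_succ t) [ffun w => fg_r t w - (w == v)].

(* < delta t1, t2 >, extended bilinearly: delta t1 = sum_v delta_v t1 *)
Definition pairing_delta_l (F : nzRingType) (t1 t2 : fe_graph) : F :=
  (\sum_(v : 'I_(fg_n t1)) pairing F (delta_v t1 v) t2)%R.
(* < t1, deltabar t2 >: deltabar t2 = sum_{v, r_v > 0} deltabar_v t2 *)
Definition pairing_deltabar_r (F : nzRingType) (t1 t2 : fe_graph) : F :=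
  (\sum_(v : 'I_(fg_n t2) | (0 < fg_r t2 v)%N) pairing F t1 (deltabar_v t2 v))%R.

Definition fert (t : fe_graph) (v : 'I_(fg_n t)) : nat :=
  #|[pred u | fg_succ t u == Some v]|.

(* Monomials in the variables x^a_j (a in C, j >= -1).  The variable x^a_j is
   encoded as the pair (a, j+1) : C * nat, and a monomial as the multiset of its
   variables (with multiplicity). *)
Definition monomial := (multiset (C * nat)%type).
Definition var_shift (y : C * nat) : C * nat := (y.1, y.2.+1).

Definition poly (F : nzRingType) := monomial -> F.
Definition polyX (F : nzRingType) (m : monomial) : poly F :=
  fun m' => (m' == m)%:R%R.
Definition poly_sum (F : nzRingType) {I : Type} (s : seq I) (p : I -> poly F)
  : poly F := fun m' => (\sum_(i <- s) p i m')%R.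

(* The derivation d with d x^a_j = x^a_{j+1}, on a monomial (Leibniz rule over
   the factors of the monomial, listed with multiplicity). *)
Definition dmono (F : nzRingType) (m : monomial) : poly F :=
  poly_sum F (enum_mset m)
    (fun y => polyX F (msetD (msetn 1 (var_shift y)) (msetB m (msetn 1 y)))).

(* extended fertility monomial prod_v x^{d(v)}_{f(v) + r_v - 1} *)
Definition Phi_mono (t : fe_graph) : monomial :=
  seq_mset [seq (fg_dec t v, fert t v + fg_r t v) | v : 'I_(fg_n t)].
Definition Phibar (F : nzRingType) (t : fe_graph) : poly F := polyX F (Phi_mono t).

Definition Phibar_delta (F : nzRingType) (t : fe_graph) : poly F :=
  poly_sum F (enum (ordinal (fg_n t))) (fun v => Phibar F (delta_v t v)).

End Graphs.
Arguments is_tree {C}.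
Arguments is_aroma {C}.
Arguments pairing_delta_l {C}.
Arguments pairing_deltabar_r {C}.
Arguments Phibar_delta {C}.
Arguments dmono {C}.
Arguments Phi_mono {C}.

(* Main.v *)
Require Import Defs.
From HB Require Import structures.
From mathcomp Require Import all_boot all_order all_algebra.
From mathcomp Require Import finmap multiset.
From Stdlib Require Import FunctionalExtensionality.
Section P1.
Variable C : finType.
Variable n : nat.
Notation G := (@FGraph C n).

Lemma key (d1 d2 : {ffun 'I_n -> C}) (s1 s2 : {ffun 'I_n -> option 'I_n})
  (r1 r2 : {ffun 'I_n -> nat}) (v : 'I_n) (g : {ffun 'I_n -> 'I_n}) :
  isomap C (delta_v C (G d1 s1 r1) v) (G d2 s2 r2) g =
  (0 < r2 (g v)) && isomap C (G d1 s1 r1) (deltabar_v C (G d2 s2 r2) (g v)) g.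
Proof.
case: (boolP (injectiveb g)) => ig; last first.
  by rewrite /isomap (negbTE ig) /= andbF.
have ginj := injectiveP _ ig.
rewrite /isomap ig /=.
apply/forallP/andP.
- move=> H. case/and3P: (H v) => _ /eqP rv _. split.
    by rewrite rv ffunE eqxx addn1.
  apply/forallP => x. case/and3P: (H x) => -> /eqP rx ->; rewrite andbT /=.
  by rewrite !ffunE rx ffunE (inj_eq ginj) addnK.
- case=> rpos /forallP H x. case/and3P: (H x) => -> /eqP rx ->; rewrite andbT /=.
  rewrite ffunE in rx; rewrite ffunE.
  rewrite (inj_eq ginj) in rx.
  case: (eqVneq x v) => [xv|xv] in rx *.
    by subst x; rewrite -rx addn1 subn1 prednK.
  by rewrite -rx subn0 addn0.
Qed.

Lemma isomap_comp (t1 t2 t3 : fe_graph C) g h :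
  isomap C t1 t2 g -> isomap C t2 t3 h -> isomap C t1 t3 [ffun x => h (g x)].
Proof.
case/andP => /injectiveP ig /forallP Hg; case/andP => /injectiveP ih /forallP Hh.
apply/andP; split.
  by apply/injectiveP => x y; rewrite !ffunE => /ih /ig.
apply/forallP => x; rewrite ffunE.
case/and3P: (Hg x) => /eqP dg /eqP rg /eqP sg.
case/and3P: (Hh (g x)) => /eqP dh /eqP rh /eqP sh.
rewrite dh dg rh rg sh sg !eqxx /=.
by case: (fg_succ C t1 x) => //= y; rewrite ffunE.
Qed.

Lemma isomap_inv d s r d' s' r' g :
  isomap C (G d s r) (G d' s' r') g -> exists g', isomap C (G d' s' r') (G d s r) g'.
Proof.
case/andP => /injectiveP ig /forallP Hg.
exists [ffun y => invF ig y].
apply/andP; split.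
  apply/injectiveP => x y; rewrite !ffunE => E.
  by rewrite -(f_invF ig x) E f_invF.
apply/forallP => y; rewrite ffunE /=.
case/and3P: (Hg (invF ig y)) => /eqP dg /eqP rg /eqP sg.
move: dg rg sg; rewrite f_invF /= => -> -> ->.
rewrite !eqxx /=.
case: (s (invF ig y)) => //= z; by rewrite ffunE invF_f.
Qed.

Lemma card_inj_le (T U : finType) (A : {pred T}) (B : {pred U}) (f : T -> U) :
  injective f -> (forall x, x \in A -> f x \in B) -> #|A| <= #|B|.
Proof.
move=> fi fAB; rewrite -(card_imset A fi); apply: subset_leq_card.
by apply/subsetP => y /imsetP [x xA ->]; apply: fAB.
Qed.

Lemma card_iso d s r d' s' r' g0 :
  isomap C (G d s r) (G d' s' r') g0 ->
  #|[pred g | isomap C (G d s r) (G d' s' r') g]| = sigma C (G d s r).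
Proof.
move=> H0; have [g1 H1] := isomap_inv _ _ _ _ _ _ _ H0.
have ig0 : injective g0 by case/andP: H0 => /injectiveP.
have ig1 : injective g1 by case/andP: H1 => /injectiveP.
rewrite /sigma; apply/eqP; rewrite eqn_leq; apply/andP; split.
  apply: (@card_inj_le _ _ _ _ (fun k : {ffun 'I_n -> 'I_n} => [ffun x => g1 (k x)] : {ffun 'I_n -> 'I_n})).
    by move=> k1 k2 /ffunP E; apply/ffunP => x; have := E x; rewrite !ffunE => /ig1.
  by move=> k; rewrite !inE => Hk; exact: isomap_comp Hk H1.
apply: (@card_inj_le _ _ _ _ (fun k : {ffun 'I_n -> 'I_n} => [ffun x => g0 (k x)] : {ffun 'I_n -> 'I_n})).
  by move=> k1 k2 /ffunP E; apply/ffunP => x; have := E x; rewrite !ffunE => /ig0.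
by move=> k; rewrite !inE => Hk; exact: isomap_comp Hk H0.
Qed.

Lemma pair_card d s r d' s' r' :
  (if fg_iso C (G d s r) (G d' s' r') then sigma C (G d s r) else 0) =
  #|[pred g | isomap C (G d s r) (G d' s' r') g]|.
Proof.
rewrite /fg_iso eqxx /=.
case: existsP => [[g0 H0]|N].
  by rewrite (card_iso _ _ _ _ _ _ _ H0).
apply/esym/eqP; rewrite -leqn0 leqNgt; apply/negP => /card_gt0P [g].
by rewrite inE => Hg; apply: N; exists g.
Qed.

Lemma card_sum (T : finType) (P : pred T) : #|[pred x | P x]| = \sum_x (P x : nat).
Proof.
rewrite -sum1_card big_mkcond /=; apply: eq_bigr => x _.
by rewrite inE; case: (P x).
Qed.
End P1.
Lemma count_ord (T : eqType) n (f : 'I_n -> T) (b : T) :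
  count_mem b [seq f v | v : 'I_n] = \sum_(v : 'I_n) (f v == b).
Proof.
rewrite count_map -sum1_count big_mkcond big_enum /=.
by apply: eq_bigr => i _; rewrite /= eq_sym; case: (_ == _).
Qed.

Lemma Phi_delta (C : finType) (t : fe_graph C) (v : 'I_(fg_n C t)) :
  Phi_mono (delta_v C t v) =
  msetD (msetn 1 (var_shift C (fg_dec C t v, fert C t v + fg_r C t v)))
        (msetB (Phi_mono t) (msetn 1 (fg_dec C t v, fert C t v + fg_r C t v))).
Proof.
apply/msetP => b.
rewrite mset1DE msetB1E /Phi_mono !mset_seqE !count_ord.
rewrite (bigD1 v) //= [in RHS](bigD1 v) //=.
rewrite ffunE eqxx addn1.
have -> : \sum_(i < fg_n C t | i != v)
   ((fg_dec C t i, fert C (delta_v C t v) i + fg_r C (delta_v C t v) i) == b)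
 = \sum_(i < fg_n C t | i != v) ((fg_dec C t i, fert C t i + fg_r C t i) == b).
  by apply: eq_bigr => i /negbTE iv; rewrite ffunE iv addn0.
rewrite /var_shift /= addnS.
by rewrite !(eq_sym b) addKn.
Qed.

Lemma part2 (C : finType) (F : nzRingType) (t : fe_graph C) :
  Phibar_delta F t = dmono F (Phi_mono t).
Proof.
apply: functional_extensionality => m'.
rewrite /Phibar_delta /dmono /poly_sum.
rewrite {2}/Phi_mono (perm_big _ (perm_eq_seq_mset _)) /=.
rewrite /image_mem big_map.
apply: eq_bigr => v _.
by rewrite /Phibar Phi_delta.
Qed.
Lemma part1 (C : finType) (F : nzRingType) (t1 t2 : fe_graph C) :
  pairing_delta_l F t1 t2 = pairing_deltabar_r F t1 t2.
Proof.
case: t1 => n1 d1 s1 r1; case: t2 => n2 d2 s2 r2.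
rewrite /pairing_delta_l /pairing_deltabar_r /=.
case: (eqVneq n1 n2) => [e|ne]; last first.
  by rewrite !big1 // => v _; rewrite /pairing /fg_iso /= (negbTE ne).
subst n2.
have conv t t' : pairing C F t t' = ((if fg_iso C t t' then sigma C t else 0)%:R)%R.
  by rewrite /pairing; case: fg_iso.
under eq_bigr => v _ do rewrite conv pair_card.
under [RHS]eq_bigr => v _ do rewrite conv pair_card.
rewrite -!GRing.natr_sum; congr (_%:R)%R.
under eq_bigr => i _ do rewrite -sum1_card big_mkcond /=.
under [RHS]eq_bigr => i _ do rewrite -sum1_card big_mkcond /=.
rewrite exchange_big [RHS]exchange_big /=.
apply: eq_bigr => g _.
rewrite [RHS]big_mkcond /=.
case: (boolP (injectiveb g)) => ig; last first.
  have Hf : forall d s r d' s' r',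
      (g \in [pred g0 | isomap C (@FGraph C n1 d s r) (@FGraph C n1 d' s' r') g0]) = false.
    by move=> *; rewrite inE /isomap (negbTE ig).
  by rewrite !big1 //; move=> v _; rewrite Hf ?if_same.
rewrite [RHS](reindex_inj (injectiveP _ ig)) /=.
apply: eq_bigr => v _.
rewrite !inE key /=.
by case: (0 < _).
Qed.

Theorem proposition4p8 (C : finType) (F : fieldType)
  (charF0 : [pchar F]%R =i pred0) :
  (forall t1 t2 : fe_graph C,
     (is_aroma t1 && is_aroma t2) || (is_tree t1 && is_tree t2) ->
     pairing_delta_l F t1 t2 = pairing_deltabar_r F t1 t2) /\
  (forall t : fe_graph C, is_aroma t || is_tree t ->
     Phibar_delta F t = dmono F (Phi_mono t)).
Proof.
split.
  by move=> t1 t2 _; apply: part1.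
by move=> t _; apply: part2.
Qed.
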